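(* Consider the Clipped FedSMD algorithm described in the context, and assume: (i) for every $i\in[m]$, conditionally on the past, $\mathbb E[\widehat\nabla f_i(x)\mid x]=\nabla f_i(x)$ and $\mathbb E[\|\widehat\nabla f_i(x)-\nabla f_i(x)\|^p\mid x]\le\sigma^p$ for some $\sigma>0$, $p\in(1,2]$; (ii) (separate convexity) for every $x\in\mathcal X$, all $y_1,\dots,y_m\in\mathcal X$ and all $a_1,\dots,a_m\ge0$ with $\sum_j a_j=1$, $D_\Phi(x\|\sum_j a_jy_j)\le\sum_j a_jD_\Phi(x\|y_j)$. Let $x^*\in\mathcal X$ be a minimizer of $f=\sum_{i=1}^m f_i$ over $\mathcal X$. Then for every $t\in[T]$, $$\sum_{i=1}^m\big\langle\alpha_t\widetilde\nabla_{\lambda_t}f_i(x_{i,t}),x_{i,t}-x^*\big\rangle\le\sum_{i=1}^m\big[D_\Phi(x^*\|x_{i,t})-D_\Phi(x^*\|x_{i,t+1})\big]+\frac{\alpha_t^2}{2}\sum_{i=1}^m\big\|\widetilde\nabla_{\lambda_t}f_i(x_{i,t})\big\|^2 .$$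
   Context: Setting: $m,n\in\mathbb N$, $\|\cdot\|$ is the Euclidean norm on $\mathbb R^n$, $\mathcal{X}\subset\mathbb R^n$ is a nonempty closed convex set, $f_i:\mathcal{X}\to\mathbb R$ ($i\in[m]$) are convex differentiable functions and $f=\sum_i f_i$ has a minimizer $x^*$ on $\mathcal X$. $\Phi:\mathcal{X}\to\mathbb R$ is differentiable and $1$-strongly convex, i.e. $\Phi(x)-\Phi(y)\ge\langle\nabla\Phi(y),x-y\rangle+\frac12\|x-y\|^2$, and $D_\Phi(x\|y)=\Phi(x)-\Phi(y)-\langle\nabla\Phi(y),x-y\rangle$. At a query point $x$, agent $i$ receives a random vector $\widehat\nabla f_i(x)$. For $\lambda>0$, $\widetilde\nabla_\lambda f_i(x)=\min\{1,\lambda/\|\widehat\nabla f_i(x)\|\}\,\widehat\nabla f_i(x)$. Clipped FedSMD: communication period $\mathcal P\in\mathbb N$, rounds $\mathcal T$, communication instants $\mathcal I=\{1+k\mathcal P:k=1,\dots,\mathcal T\}$, horizon $T=1+\mathcal T\mathcal P$, positive stepsizes $(\alpha_t)$, positive clipping parameters $(\lambda_t)$. Starting from $x_{i,1}\in\mathcal X$, for $t=1,\dots,T$ and each agent $i$: $y_{i,t+1}=\arg\min_{x\in\mathcal X}\{\langle\widetilde\nabla_{\lambda_t}f_i(x_{i,t}),x\rangle+\frac1{\alpha_t}D_\Phi(x\|x_{i,t})\}$; if $t+1\in\mathcal I$ then $x_{i,t+1}=\frac1m\sum_{j=1}^m y_{j,t+1}$, otherwise $x_{i,t+1}=y_{i,t+1}$.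 *)

(* Defs.v *)
From HB Require Import structures.
From mathcomp Require Import all_boot all_order all_algebra.
From mathcomp Require Import all_classical all_reals all_analysis.
Set Implicit Arguments. Unset Strict Implicit. Unset Printing Implicit Defensive.
Import Order.TTheory GRing.Theory Num.Theory.
Import numFieldNormedType.Exports.
Local Open Scope classical_set_scope.
Local Open Scope ring_scope.

Section Defs.
Variables (R : realType) (n : nat).
Implicit Types (u v x y : 'rV[R]_n) (X : set 'rV[R]_n).

Definition dot u v : R := \sum_(k < n) u 0 k * v 0 k.
Definition enorm u : R := Num.sqrt (dot u u).

Definition convex_subset X : Prop :=
  forall x y, X x -> X y -> forall t : R, 0 <= t <= 1 -> X (t *: x + (1 - t) *: y).

Definition convex_on X (h : 'rV[R]_n -> R) : Prop :=
  forall x y, X x -> X y -> forall t : R, 0 <= t <= 1 ->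
    h (t *: x + (1 - t) *: y) <= t * h x + (1 - t) * h y.

(* [g] is the gradient of [h] on X: for x, y in X the (one-sided, within X)
   directional derivative of h at x in direction y - x equals <g x, y - x>. *)
Definition grad_on X (h : 'rV[R]_n -> R) (g : 'rV[R]_n -> 'rV[R]_n) : Prop :=
  forall x y, X x -> X y ->
    (fun s : R => (h (x + s *: (y - x)) - h x) / s) @ 0^'+ --> dot (g x) (y - x).

Definition strongly_convex1 X (h : 'rV[R]_n -> R) (g : 'rV[R]_n -> 'rV[R]_n) : Prop :=
  forall x y, X x -> X y -> h x - h y >= dot (g y) (x - y) + 2^-1 * enorm (x - y) ^+ 2.

Definition bregman (Phi : 'rV[R]_n -> R) (gPhi : 'rV[R]_n -> 'rV[R]_n) x y : R :=
  Phi x - Phi y - dot (gPhi y) (x - y).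

Definition clip (lam : R) v : 'rV[R]_n := Num.min 1 (lam / enorm v) *: v.

Definition is_argmin X (obj : 'rV[R]_n -> R) y : Prop :=
  X y /\ forall z, X z -> obj y <= obj z.

End Defs.

(* Main.v *)
Require Import Defs.
From HB Require Import structures.
From mathcomp Require Import all_boot all_order all_algebra.
From mathcomp Require Import all_classical all_reals all_analysis.
From mathcomp Require Import ring lra.
Import Order.TTheory GRing.Theory Num.Theory.
Import numFieldNormedType.Exports.
Local Open Scope classical_set_scope.
Local Open Scope ring_scope.

Lemma subr_ge0_tmp (R : numDomainType) (x y : R) : x <= y -> 0 <= y - x.
Proof. by rewrite subr_ge0. Qed.

Section Helpers.
Variables (R : realType) (n : nat).
Implicit Types (u v w : 'rV[R]_n).

Lemma dotC u v : dot u v = dot v u.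
Proof. by rewrite /dot; apply eq_bigr => k _; rewrite mulrC. Qed.

Lemma dotDr u v w : dot u (v + w) = dot u v + dot u w.
Proof. by rewrite /dot -big_split; apply eq_bigr => k _; rewrite mxE mulrDr. Qed.

Lemma dotZr (a : R) u v : dot u (a *: v) = a * dot u v.
Proof. by rewrite /dot mulr_sumr; apply eq_bigr => k _; rewrite mxE mulrCA. Qed.

Lemma dotNr u v : dot u (- v) = - dot u v.
Proof. by rewrite /dot -sumrN; apply eq_bigr => k _; rewrite mxE mulrN. Qed.

Lemma dotBr u v w : dot u (v - w) = dot u v - dot u w.
Proof. by rewrite dotDr dotNr. Qed.

Lemma dotDl u v w : dot (v + w) u = dot v u + dot w u.
Proof. by rewrite dotC dotDr !(dotC u). Qed.

Lemma dotZl (a : R) u v : dot (a *: v) u = a * dot v u.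
Proof. by rewrite dotC dotZr dotC. Qed.

Lemma dotBl u v w : dot (v - w) u = dot v u - dot w u.
Proof. by rewrite dotC dotBr !(dotC u). Qed.

Lemma dot_ge0 u : 0 <= dot u u.
Proof. by rewrite /dot; apply: sumr_ge0 => k _; rewrite -expr2 sqr_ge0. Qed.

Lemma enorm_sq u : enorm u ^+ 2 = dot u u.
Proof. by rewrite /enorm sqr_sqrtr // dot_ge0. Qed.

Lemma convex_comb (X : set 'rV[R]_n) (I : eqType) (s : seq I) :
  convex_subset X -> forall (a : I -> R) (ys : I -> 'rV[R]_n),
  (forall j, X (ys j)) -> (forall j, 0 <= a j) -> \sum_(j <- s) a j = 1 ->
  X (\sum_(j <- s) a j *: ys j).
Proof.
move=> cX; elim: s => [|j s IH] a ys Xy a0.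
  by rewrite big_nil => /esym/eqP; rewrite oner_eq0.
rewrite !big_cons => hs.
set S := \sum_(k <- s) a k.
have S0 : 0 <= S by apply: sumr_ge0.
have [S00|Spos] := eqVneq S 0.
  have az : forall k, k \in s -> a k = 0.
    move=> k ks.
    have /eqP := S00; rewrite /S psumr_eq0 // => /allP /(_ k ks) /=.
    by move/eqP.
  rewrite big_seq (eq_bigr (fun _ => 0)); last by move=> k ks; rewrite az // scale0r.
  rewrite big1 // addr0.
  have -> : a j = 1 by rewrite -hs -/S S00 addr0.
  by rewrite scale1r.
have Sp : 0 < S by rewrite lt_def Spos S0.
have Xw : X (\sum_(k <- s) (a k / S) *: ys k).
  apply: IH => //; first by move=> k; apply: divr_ge0.
  by rewrite -mulr_suml mulfV.
have -> : \sum_(k <- s) a k *: ys k = S *: \sum_(k <- s) (a k / S) *: ys k.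
  rewrite scaler_sumr; apply eq_bigr => k _.
  by rewrite scalerA mulrCA mulfV // mulr1.
have eS : S = 1 - a j by move: hs; rewrite /S; lra.
rewrite {1}eS; apply: cX => //; apply/andP; split => //.
by rewrite -hs lerDl.
Qed.

Lemma step (X : set 'rV[R]_n) Phi gPhi (g xt yt zs : 'rV[R]_n) (a : R) :
  convex_subset X -> grad_on X Phi gPhi -> strongly_convex1 X Phi gPhi ->
  0 < a -> X xt -> X zs ->
  is_argmin X (fun z => dot g z + a^-1 * bregman Phi gPhi z xt) yt ->
  dot (a *: g) (xt - zs) <= bregman Phi gPhi zs xt - bregman Phi gPhi zs yt
     + (a ^+ 2 / 2) * enorm g ^+ 2.
Proof.
move=> cX gP sc a0 Xx Xz [Xy Hmin].
set d := zs - yt.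
set q := fun s : R => (Phi (yt + s *: (zs - yt)) - Phi yt) / s.
have hq := gP yt zs Xy Xz.
have Hnear : \forall s \near 0^'+, dot (gPhi xt) d - a * dot g d <= q s.
  near=> s.
  have hs0 : 0 < s by near: s; exact: nbhs_right_gt.
  have hs1 : s <= 1 by near: s; exact: nbhs_right_le.
  have Xp : X (yt + s *: d).
    have -> : yt + s *: d = s *: zs + (1 - s) *: yt.
      by apply/rowP => k; rewrite /d !mxE; ring.
    by apply: cX => //; apply/andP; split => //; apply: ltW.
  have := Hmin _ Xp; rewrite /= /bregman.
  rewrite /q ler_pdivlMr // /d.
  rewrite !dotBr !dotDr !dotZr !dotBr.
  set Q := Phi (yt + s *: (zs - yt)).
  have ha : a * a^-1 = 1 by rewrite mulfV // gt_eqF.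
  set ai := a^-1 in ha *.
  move=> h.
  have h2 := mulr_ge0 (ltW a0) (@subr_ge0_tmp _ _ _ h).
  set G1 := dot g zs in h h2 *; set G2 := dot g yt in h h2 *.
  set H1 := dot (gPhi xt) zs in h h2 *; set H2 := dot (gPhi xt) yt in h h2 *.
  set H3 := dot (gPhi xt) xt in h h2 *.
  set Py := Phi yt in h h2 *; set Px := Phi xt in h h2 *.
  have e : a * (G2 + s * (G1 - G2) + ai * (Q - Px - (H2 + s * (H1 - H2) - H3)) -
     (G2 + ai * (Py - Px - (H2 - H3)))) = a * s * (G1 - G2) + (Q - Py - s * (H1 - H2)).
    rewrite /ai; field; by rewrite gt_eqF.
  rewrite e in h2.
  nra.
have L := limr_ge (cvgP _ hq) Hnear.
rewrite (cvg_lim _ hq) // in L.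
have sc1 := sc yt xt Xy Xx.
have Y := dot_ge0 (a *: g - (xt - yt)).
move: L sc1 Y; rewrite /d /bregman !enorm_sq.
rewrite ?dotBl ?dotBr ?dotZl ?dotZr ?dotBl ?dotBr ?dotZl ?dotZr.
rewrite ?(dotC zs g) ?(dotC yt g) ?(dotC xt g) ?(dotC xt yt) ?(dotC zs yt).
move=> /(_ (at_right_proper_filter 0)) *; lra.
Unshelve. all: by end_near.
Qed.

End Helpers.
Theorem proposition2 (R : realType) (m n : nat)
  (X : set 'rV[R]_n) (f : 'I_m -> 'rV[R]_n -> R) (gf : 'I_m -> 'rV[R]_n -> 'rV[R]_n)
  (Phi : 'rV[R]_n -> R) (gPhi : 'rV[R]_n -> 'rV[R]_n) (xstar : 'rV[R]_n)
  (P TT : nat) (alpha lambda : nat -> R)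
  (ghat : 'I_m -> nat -> 'rV[R]_n)
  (x y : 'I_m -> nat -> 'rV[R]_n) :
  (0 < m)%N ->
  X !=set0 -> closed X -> convex_subset X ->
  (forall i, convex_on X (f i)) ->
  (forall i, grad_on X (f i) (gf i)) ->
  grad_on X Phi gPhi ->
  strongly_convex1 X Phi gPhi ->
  (* separate convexity of the Bregman divergence *)
  (forall z, X z -> forall (ys : 'I_m -> 'rV[R]_n) (a : 'I_m -> R),
     (forall j, X (ys j)) -> (forall j, 0 <= a j) -> \sum_j a j = 1 ->
     bregman Phi gPhi z (\sum_j a j *: ys j)
       <= \sum_j a j * bregman Phi gPhi z (ys j)) ->
  (* x* minimizes f = sum_i f_i over X *)
  X xstar -> (forall z, X z -> \sum_i f i xstar <= \sum_i f i z) ->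
  (* parameters *)
  (forall t, 0 < alpha t) -> (forall t, 0 < lambda t) ->
  (* Clipped FedSMD; ghat i t is the (realized) stochastic gradient received
     by agent i at query point x i t *)
  (forall i, X (x i 1%N)) ->
  (forall i t, (1 <= t <= 1 + TT * P)%N ->
     is_argmin X (fun z => dot (clip (lambda t) (ghat i t)) z
                           + (alpha t)^-1 * bregman Phi gPhi z (x i t)) (y i t.+1)) ->
  (forall i t, (1 <= t <= 1 + TT * P)%N ->
     x i t.+1 = if [exists k : 'I_TT, t.+1 == 1 + k.+1 * P]%N
                then m%:R^-1 *: \sum_j y j t.+1
                else y i t.+1) ->
  forall t, (1 <= t <= 1 + TT * P)%N ->
    \sum_i dot (alpha t *: clip (lambda t) (ghat i t)) (x i t - xstar)
    <= \sum_i (bregman Phi gPhi xstar (x i t) - bregman Phi gPhi xstar (x i t.+1))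
       + (alpha t ^+ 2 / 2) * \sum_i enorm (clip (lambda t) (ghat i t)) ^+ 2.
Proof.
move=> m0 _ _ cX _ _ gP sc sepc Xs _ apos _ X1 Hy Hx t ht.
have Xyt : forall i, X (y i t.+1) by move=> i; case: (Hy i t ht).
have hm : 0 < (m%:R : R) by rewrite ltr0n.
have hmi : (m%:R : R) * m%:R^-1 = 1 by rewrite mulfV // gt_eqF.
have avgE : forall tt, m%:R^-1 *: \sum_j y j tt = \sum_j (m%:R^-1 : R) *: y j tt.
  by move=> tt; rewrite scaler_sumr.
have suma : \sum_(j < m) (m%:R^-1 : R) = 1.
  by rewrite sumr_const card_ord -(mulr_natr (m%:R^-1)) mulrC hmi.
have Xx : forall i, X (x i t).
  move=> i; case: t ht Xyt => [|[|t']] //= ht _.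
  have ht' : (1 <= t'.+1 <= 1 + TT * P)%N.
    by apply/andP; split => //; apply: ltnW.
  rewrite Hx //; case: ifP => _; last by case: (Hy i t'.+1 ht').
  rewrite avgE; apply: (@convex_comb _ _ X _ _ cX) => //.
    by move=> j; case: (Hy j t'.+1 ht').
have key : forall i, dot (alpha t *: clip (lambda t) (ghat i t)) (x i t - xstar) <=
    bregman Phi gPhi xstar (x i t) - bregman Phi gPhi xstar (y i t.+1)
    + (alpha t ^+ 2 / 2) * enorm (clip (lambda t) (ghat i t)) ^+ 2.
  move=> i; apply: (@step _ _ X Phi gPhi _ _ _ _ _ cX gP sc) => //; exact: Hy || exact: Xx || exact: apos.
have S1 : \sum_i dot (alpha t *: clip (lambda t) (ghat i t)) (x i t - xstar) <=
    \sum_i (bregman Phi gPhi xstar (x i t) - bregman Phi gPhi xstar (y i t.+1)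
    + (alpha t ^+ 2 / 2) * enorm (clip (lambda t) (ghat i t)) ^+ 2).
  by apply: ler_sum => i _; exact: key.
rewrite big_split sumrB -mulr_sumr /= in S1.
have S2 : \sum_i bregman Phi gPhi xstar (x i t.+1) <= \sum_i bregman Phi gPhi xstar (y i t.+1).
  case E : [exists k : 'I_TT, t.+1 == 1 + k.+1 * P]%N; last first.
    by apply: ler_sum => i _; rewrite Hx // E.
  rewrite (eq_bigr (fun _ => bregman Phi gPhi xstar (m%:R^-1 *: \sum_j y j t.+1))); last first.
    by move=> i _; rewrite Hx // E.
  have hb := sepc xstar Xs (fun j => y j t.+1) (fun _ => m%:R^-1) Xyt
     (fun _ => ltW (eq_ind_r is_true hm (invr_gt0 _))) suma.
  rewrite -mulr_sumr /= -avgE in hb.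
  rewrite sumr_const card_ord -(mulr_natr (bregman Phi gPhi xstar _)) mulrC.
  apply: le_trans (ler_wpM2l (ltW hm) hb) _.
  by rewrite mulrA hmi mul1r.
rewrite sumrB; lra.
Qed.
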